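(* (i) For every integer $d\geq 2$ there exist a partition $\mathcal{P}$ of $\mathbb{R}^{d}$ and $M\in(0,\infty)$ such that every $X\in\mathcal{P}$ is Lebesgue measurable with $m(X)<M$, together with a function $\epsilon:\mathbb{R}^{d}\to(0,\infty)$ such that $|\mathcal{N}_{\epsilon(\vec{p})}(\vec{p})|\leq d$ for all $\vec{p}\in\mathbb{R}^{d}$. (ii) For $d=1$: if $\mathcal{P}$ is a partition of $\mathbb{R}$ and $M\in(0,\infty)$ is such that every $X\in\mathcal{P}$ is Lebesgue measurable with $m(X)<M$, then for every function $\epsilon:\mathbb{R}\to(0,\infty)$ there exists $p\in\mathbb{R}$ with $|\mathcal{N}_{\epsilon(p)}(p)|\geq 2$.
   Context: $m$ is Lebesgue measure. On $\mathbb{R}^d$ use $d_{max}(\vec{x},\vec{y})=\max_i|x_i-y_i|$, $\overline{B}_{r}(\vec{p})=\{\vec{x}:d_{max}(\vec{x},\vec{p})\le r\}$ and $\mathcal{N}_{r}(\vec{p})=\{X\in\mathcal{P}: X\cap\overline{B}_{r}(\vec{p})\neq\emptyset\}$. *)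

(* Defs.v *)
From HB Require Import structures.
From mathcomp Require Import all_boot all_order all_algebra.
From mathcomp Require Import all_classical all_reals all_analysis.
Set Implicit Arguments. Unset Strict Implicit. Unset Printing Implicit Defensive.
Import Order.TTheory GRing.Theory Num.Theory.
Import numFieldNormedType.Exports.
Local Open Scope classical_set_scope.
Local Open Scope ring_scope.

Section Defs.
Variables (R : realType) (d : nat).
Notation V := 'rV[R]_d.

Definition dmax (x y : V) : R := \big[Num.max/0]_(i < d) `|x ord0 i - y ord0 i|.

Definition cball_max (r : R) (p : V) : set V := [set x | dmax x p <= r].

Definition box (a b : V) : set V := [set x | forall i, a ord0 i <= x ord0 i < b ord0 i].
Definition box_vol (a b : V) : R := \prod_(i < d) Num.max 0 (b ord0 i - a ord0 i).

Definition lebesgue_outer (A : set V) : \bar R :=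
  ereal_inf [set (\sum_(0 <= k <oo) (box_vol (ab.1 k) (ab.2 k))%:E)%E
            | ab in [set ab : (nat -> V) * (nat -> V) |
                     A `<=` \bigcup_k box (ab.1 k) (ab.2 k)]].

(* Lebesgue measurable = Caratheodory measurable for the Lebesgue outer measure;
   on such sets the Lebesgue measure m is the outer measure. *)
Definition lebesgue_measurable (A : set V) : Prop :=
  caratheodory_measurable lebesgue_outer A.
Definition m (A : set V) : \bar R := lebesgue_outer A.

End Defs.

Definition is_partition (T : Type) (P : set (set T)) : Prop :=
  [/\ forall X, P X -> X !=set0,
      forall X Y, P X -> P Y -> X `&` Y !=set0 -> X = Y
    & forall x, exists X, P X /\ X x].

Definition neighbours (R : realType) (d : nat) (P : set (set 'rV[R]_d)) (r : R)
  (p : 'rV[R]_d) : set (set 'rV[R]_d) :=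
  [set X | P X /\ X `&` cball_max r p !=set0].

(* Main.v *)
Require Import Defs.
From HB Require Import structures.
From mathcomp Require Import all_boot all_order all_algebra.
From mathcomp Require Import all_classical all_reals all_analysis.
From mathcomp Require Import ring lra zify.
Set Implicit Arguments. Unset Strict Implicit. Unset Printing Implicit Defensive.
Import Order.TTheory GRing.Theory Num.Theory.
Import numFieldNormedType.Exports.
Local Open Scope classical_set_scope.
Local Open Scope ring_scope.

Lemma maxcase (R : realType) (x y : R) :
  (Num.max x y = x /\ y <= x) \/ (Num.max x y = y /\ x <= y).
Proof. by case: (leP x y) => h; [right|left]; split => //; rewrite ltW. Qed.
Lemma mincase (R : realType) (x y : R) :
  (Num.min x y = x /\ x <= y) \/ (Num.min x y = y /\ y <= x).
Proof. by case: (leP x y) => h; [left|right]; split => //; rewrite ltW. Qed.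
Lemma split_len (R : realType) (a b c : R) :
  Num.max 0 (Num.min b c - a) + Num.max 0 (b - Num.max a c) = Num.max 0 (b - a).
Proof.
case: (mincase b c) => -[-> h1]; case: (maxcase a c) => -[-> h2];
repeat match goal with |- context [Num.max 0 ?x] => case: (maxcase 0 x) => -[-> ?] end; lra.
Qed.

Section Outer.
Variables (R : realType) (n : nat).
Notation V := 'rV[R]_n.+1.
Local Notation mu := (@lebesgue_outer R n.+1).

Lemma box_vol_ge0 (a b : V) : 0 <= box_vol a b.
Proof. by apply: prodr_ge0 => i _; rewrite le_max lexx. Qed.

Lemma box_vol0 (a : V) : box_vol a a = 0.
Proof. by rewrite /box_vol big_ord_recl subrr maxxx mul0r. Qed.

Local Open Scope ereal_scope.

Lemma outer_cover (A : set V) (a b : nat -> V) :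
  A `<=` \bigcup_k box (a k) (b k) ->
  mu A <= \sum_(0 <= k <oo) (box_vol (a k) (b k))%:E.
Proof. by move=> cov; apply: ereal_inf_lbound; exists (a, b). Qed.

Lemma outer_ge0 (A : set V) : 0 <= mu A.
Proof.
apply: le_ereal_inf_tmp => _ [ab _ <-]; apply: nneseries_ge0 => k _ _.
by rewrite lee_fin box_vol_ge0.
Qed.

Lemma outer0 : mu set0 = 0.
Proof.
apply/le_anti; rewrite outer_ge0 andbT.
have := @outer_cover set0 (fun _ => 0%R : V) (fun _ => 0%R : V) (sub0set _).
by rewrite eseries0 // => k _ _; rewrite box_vol0.
Qed.

Lemma le_outer : {homo mu : A B / A `<=` B >-> A <= B}.
Proof.
move=> A B AB; apply: ereal_inf_le_tmp => _ [ab cov <-].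
by exists ab => //; exact: subset_trans cov.
Qed.


Lemma outer_sigma_subadditive : sigma_subadditive mu.
Proof.
move=> A; have [[i ioo]|] := pselect (exists i, mu (A i) = +oo).
  rewrite (eseries_pinfty _ _ ioo) ?leey// => k _.
  by rewrite -ltNye (lt_le_trans _ (outer_ge0 _)).
rewrite -forallNE => Aoo.
suff add2e (e : {posnum R}) :
    mu (\bigcup_n A n) <= \sum_(i <oo) mu (A i) + e%:num%:E.
  by apply/lee_addgt0Pr => _/posnumP[].
rewrite (le_trans _ (epsilon_trick _ _ _))//; last by move=> k; exact: outer_ge0.
pose P k (ab : (nat -> V) * (nat -> V)) :=
  A k `<=` \bigcup_j box (ab.1 j) (ab.2 j) /\
  \sum_(j <oo) (box_vol (ab.1 j) (ab.2 j))%:E <=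
     mu (A k) + (e%:num / (2 ^ k.+1)%:R)%:E.
have [G PG] : {G : nat -> (nat -> V) * (nat -> V) & forall k, P k (G k)}.
  apply: (@choice _ _ P) => k; rewrite /P.
  have := Aoo k; rewrite /lebesgue_outer.
  set S := (X in ereal_inf X); move infS : (ereal_inf S) => iS.
  case: iS infS => [r Sr|Soo|Soo] Sk.
  - have en1 : (0 < e%:num / (2 ^ k.+1)%:R)%R by [].
    have /(lb_ereal_inf_adherent en1) : ereal_inf S \is a fin_num by rewrite Sr.
    move=> [x [ab cov abx] xS].
    by exists ab; split => //; rewrite abx -Sr; exact/ltW.
  - by [].
  - suff : lbound S 0 by move/le_ereal_inf_tmp; rewrite Soo.

      by move=> /= _ [ab _ <-]; apply: nneseries_ge0 => j _ _; rewrite lee_fin box_vol_ge0.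
pose c (ij : nat * nat) : \bar R :=
  (box_vol ((G ij.1).1 ij.2) ((G ij.1).2 ij.2))%:E.
have c_ge0 x : 0 <= c x by rewrite lee_fin box_vol_ge0.
apply: (@le_trans _ _ (\esum_(i in setT) c i)).
  have /card_esym/ppcard_eqP[f] := card_nat2.
  apply: le_trans; first apply: (@outer_cover _ (fun k => (G (f k).1).1 (f k).2)
     (fun k => (G (f k).1).2 (f k).2)).
    move=> t [i _ /(PG i).1 [j _ Bijt]]; exists (f^-1%FUN (i, j)) => //=.
    by rewrite invK ?inE.
  rewrite -(esum_pred_image c _ xpredT) ?[fun=> _]set_true//.
  by rewrite image_eq.
rewrite (_ : esum _ _ = \sum_(i <oo) \sum_(j <oo ) c (i, j)); last first.
  pose J : nat -> set (nat * nat) := fun i => [set (i, j) | j in setT].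
  rewrite (_ : setT = \bigcup_k J k); last first.
    by rewrite predeqE => -[a b]; split => // _; exists a => //; exists b.
  rewrite esum_bigcupT /=; last 2 first.
    - apply/trivIsetP => i j _ _ ij.
      rewrite predeqE => -[n0 m0] /=; split => //= -[] [_] _ [<-{n0} _].
      by move=> [m' _] [] /esym/eqP; rewrite (negbTE ij).
    - by [].
  rewrite -(image_id [set: nat]) -fun_true esum_pred_image//; last first.
    by move=> n0 _; exact: esum_ge0.
  apply: eq_eseriesr => /= j _.
  rewrite -(esum_pred_image c (pair j) predT)//=; last first.
    by move=> ? ? _ _; exact: (@can_inj _ _ _ snd).
  by congr esum; rewrite predeqE => -[a b]; split; move=> [i _ <-]; exists i.
apply: lee_lim.
- apply: is_cvg_nneseries => n0 *.
  by apply: nneseries_ge0 => m *; exact: (c_ge0 (n0, m)).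
- by apply: is_cvg_nneseries => n0 *; apply: adde_ge0 => //; exact: outer_ge0.
- by near=> n0; apply: lee_sum => i _; exact: (PG i).2.
Unshelve. all: by end_near. Qed.


HB.instance Definition _ := isOuterMeasure.Build R V mu
  outer0 outer_ge0 le_outer outer_sigma_subadditive.

Definition upd (v : V) (j : 'I_n.+1) (t : R) : V :=
  \row_i (if i == j then t else v ord0 i).

Local Close Scope ereal_scope.
Lemma vol_split (a b : V) j c :
  box_vol a (upd b j (Num.min (b ord0 j) c)) +
  box_vol (upd a j (Num.max (a ord0 j) c)) b = box_vol a b.
Proof.
rewrite /box_vol [X in X + _](bigD1 j)// [X in _ + X](bigD1 j)// [RHS](bigD1 j)//= !mxE eqxx.
have -> : \prod_(i | i != j) Num.max 0 (upd b j (Num.min (b ord0 j) c) ord0 i - a ord0 i)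
   = \prod_(i | i != j) Num.max 0 (b ord0 i - a ord0 i).
  by apply: eq_bigr => i /negbTE ij; rewrite mxE ij.
have -> : \prod_(i | i != j) Num.max 0 (b ord0 i - upd a j (Num.max (a ord0 j) c) ord0 i)
   = \prod_(i | i != j) Num.max 0 (b ord0 i - a ord0 i).
  by apply: eq_bigr => i /negbTE ij; rewrite mxE ij.
by rewrite -mulrDl split_len.
Qed.
Local Open Scope ereal_scope.

Lemma halfspace_cara j (c : R) : mu.-caratheodory [set x : V | (x ord0 j < c)%R].
Proof.
apply: le_caratheodory_measurable => X.
apply: le_ereal_inf_tmp => _ [[a b] /= cov <-].
have cov1 : X `&` [set x : V | (x ord0 j < c)%R] `<=`
    \bigcup_k box (a k) (upd (b k) j (Num.min (b k ord0 j) c)).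
  move=> x [/cov [k _ xk] xc]; exists k => // i; rewrite !mxE.
  have := xk i; case: eqP => [->|] // /andP[-> xb] /=.
  by rewrite lt_min xb.
have cov2 : X `&` ~` [set x : V | (x ord0 j < c)%R] `<=`
    \bigcup_k box (upd (a k) j (Num.max (a k ord0 j) c)) (b k).
  move=> x [/cov [k _ xk] /negP]; rewrite -leNgt => xc; exists k => // i; rewrite !mxE.
  have := xk i; case: eqP => [->|] // /andP[ax ->].
  by rewrite ge_max ax xc.
apply: le_trans; first exact: (leeD (outer_cover cov1) (outer_cover cov2)).
rewrite -nneseriesD; last 2 first.
- by move=> k _ _; rewrite lee_fin box_vol_ge0.
- by move=> k _ _; rewrite lee_fin box_vol_ge0.
by apply: lee_nneseries => [k _ _|k _]; rewrite -?EFinD ?vol_split ?adde_ge0 ?lee_fin ?box_vol_ge0.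
Qed.

End Outer.

Section Meas.
Variables (R : realType) (n : nat).
Local Notation mu := (@lebesgue_outer R n.+1).
Local Notation T := (caratheodory_type mu).

Lemma coord_mfun j : measurable_fun setT (fun x : T => x ord0 j).
Proof.
have mE : @measurable _ R = <<s @measurable_realfun.RGenInftyO.G R >>.
  exact: (@measurable_realfun.RGenInftyO.measurableE R).
apply: (@measurability _ _ T R setT _ _ mE) => _ [_ [c ->] <-].
rewrite setTI.
have -> : (fun x : T => x ord0 j) @^-1` `]-oo, c[ = [set x : T | x ord0 j < c].
  by apply/seteqP; split => x /=; rewrite in_itv.
exact: halfspace_cara.
Qed.
End Meas.

Section Bound.
Variables (R : realType) (n : nat).
Local Notation V := 'rV[R]_n.+1.
Local Notation mu := (@lebesgue_outer R n.+1).

Lemma outer_box (lo hi : V) : (mu (box lo hi) <= (box_vol lo hi)%:E)%E.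
Proof.
have := @outer_cover R n (box lo hi) (fun k => if k is 0 then lo else 0)
  (fun k => if k is 0 then hi else 0) (fun x bx => ex_intro2 _ _ 0%N I bx).
rewrite nneseries_recl //=; last by move=> k _; rewrite lee_fin box_vol_ge0.
by rewrite eseries0 ?adde0 // => -[|k] // _ _; rewrite box_vol0.
Qed.

Lemma outer_scale (A B : set V) (j : 'I_n.+1) (s l : R) : 0 < l ->
  (forall x, B x -> A (upd x j ((x ord0 j - s) / l))) ->
  (mu B <= l%:E * mu A)%E.
Proof.
move=> l0 BA.
have h : ((l^-1)%:E * mu B <= mu A)%E.
  apply: le_ereal_inf_tmp => _ [[a b] /= cov <-].
  pose a' k := upd (a k) j (s + l * a k ord0 j).
  pose b' k := upd (b k) j (s + l * b k ord0 j).
  have covB : B `<=` \bigcup_k box (a' k) (b' k).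
    move=> x /BA /cov [k _ xk]; exists k => // i; rewrite !mxE; have := xk i.
    rewrite !mxE; case: eqP => [->|_] //.
    have e : x ord0 j = s + l * ((x ord0 j - s) / l).
      by field; rewrite gt_eqF.
    move=> /andP[h1 h2]; rewrite [in X in X && _]e [in X in _ && X]e.
    by rewrite !lerD2l !ltrD2l ler_pM2l // ltr_pM2l // h1 h2.
  have vol_eq k : box_vol (a' k) (b' k) = l * box_vol (a k) (b k).
    rewrite /box_vol [LHS](bigD1 j) // [X in _ = _ * X](bigD1 j) //= !mxE eqxx.
    rewrite mulrA; congr (_ * _).
      by rewrite (_ : _ - _ = l * (b k ord0 j - a k ord0 j)) ?maxr_pMr ?mulr0 ?ltW //; ring.
    by apply: eq_bigr => i /negbTE ij; rewrite !mxE ij.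
  apply: le_trans; first apply: (lee_wpmul2l _ (outer_cover covB)).
    by rewrite lee_fin invr_ge0 ltW.
  rewrite (eq_eseriesr (fun k _ => congr1 EFin (vol_eq k))).
  under eq_eseriesr do rewrite EFinM.
  rewrite nneseriesZl; last by move=> k _; rewrite lee_fin box_vol_ge0.
  by rewrite muleA -EFinM mulVf ?gt_eqF // mul1e.
have -> : mu B = (l%:E * ((l^-1)%:E * mu B))%E.
  by rewrite muleA -EFinM divrr ?mul1e // unitfE gt_eqF.
by apply: lee_wpmul2l; rewrite // lee_fin ltW.
Qed.

End Bound.

Lemma interp_bounds (R : realType) (a b g v v0 v1 : R) : 0 < v1 -> v1 <= v -> v <= v0 ->
  a <= g < b -> Num.min (a*v0) (a*v1) <= g * v < Num.max (b*v0) (b*v1).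
Proof.
move=> h1 h2 h3 /andP[h4 h5].
have hv : 0 < v by lra.
have q1 : a * v <= g * v by rewrite ler_pM2r.
have q2 : g * v < b * v by rewrite ltr_pM2r.
case: (mincase (a*v0) (a*v1)) => -[-> h6]; case: (maxcase (b*v0) (b*v1)) => -[-> h7];
case: (ger0P a) => ha; case: (ger0P b) => hb; apply/andP; split; nra.
Qed.

Lemma width_bound (R : realType) (a b v0 v1 : R) : 0 <= v1 -> v1 <= v0 -> a <= b ->
  Num.max (b*v0) (b*v1) - Num.min (a*v0) (a*v1) <= (b - a) * v0 + (`|a| + `|b|) * (v0 - v1).
Proof.
move=> h1 h2 h3.
case: (mincase (a*v0) (a*v1)) => -[-> h6]; case: (maxcase (b*v0) (b*v1)) => -[-> h7];
case: (ger0P a) => ha; case: (ger0P b) => hb; nra.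
Qed.

Lemma ustep (R : realType) (p l : R) : 0 < p -> 0 < l ->
  l * ((p + l)^-1)^+2 + (p + l)^-1 <= p^-1.
Proof.
move=> p0 l0.
have pl0 : 0 < p + l by rewrite addr_gt0.
have e : p^-1 - (l * ((p + l)^-1)^+2 + (p + l)^-1) = l^+2 / (p * (p + l)^+2).
  by field; rewrite ?gt_eqF.
rewrite -subr_ge0 e; apply: divr_ge0; first exact: sqr_ge0.
by rewrite mulr_ge0 ?ltW ?exprn_gt0.
Qed.

Definition w (R : realType) (t : R) : R := (1 + `|t|) ^+ 2.

Lemma w_gt0 (R : realType) (t : R) : 0 < w t.
Proof. by rewrite /w exprn_gt0 // ltr_wpDr. Qed.

Lemma series_le (R : realType) (f : nat -> R) c : (forall k, 0 <= f k) ->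
  (forall N, \sum_(0 <= k < N) f k <= c) -> (\sum_(0 <= k <oo) (f k)%:E <= c%:E)%E.
Proof.
move=> f0 h; apply: lime_le.
  by apply: is_cvg_nneseries => k _ _; rewrite lee_fin.
by apply: nearW => N; rewrite sumEFin lee_fin h.
Qed.

Section Bound2.
Variables (R : realType) (n : nat).
Local Notation V := 'rV[R]_n.+1.
Local Notation mu := (@lebesgue_outer R n.+1).

Definition Fm (m : nat) (x : V) : R :=
  x ord0 ord0 * \prod_(1 <= i < m) w (x ord0 (inord i)).

Definition Sm (m : nat) (a b : R) : set V :=
  [set x | a <= Fm m x < b /\ forall j : 'I_n.+1, (m <= j)%N -> 0 <= x ord0 j < 1].

Lemma S1_bound a b : a <= b -> (mu (Sm 1 a b) <= (b - a)%:E)%E.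
Proof.
move=> ab.
pose lo : V := \row_i (if i == ord0 then a else 0).
pose hi : V := \row_i (if i == ord0 then b else 1).
apply: le_trans (@le_outer R n _ (box lo hi) _) _.
  move=> x [hx hj] i; rewrite !mxE; case: eqP => [->|/eqP ni].
    by move: hx; rewrite /Fm big_geq // mulr1.
  apply: hj; move: ni; case: i => -[|i] //= ? _.
apply: le_trans (outer_box _ _) _; rewrite lee_fin le_eqVlt; apply/orP; left; apply/eqP.
rewrite /box_vol big_ord_recl !mxE eqxx big1 ?mulr1 ?max_r ?subr_ge0 // => i _.
by rewrite !mxE (_ : (lift ord0 i == ord0) = false) ?subr0 ?max_r //;
  apply/negbTE; rewrite eq_sym neq_lift.
Qed.

Lemma Fm_succ m (hm : (m < n.+1)%N) (x : V) : (0 < m)%N ->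
  Fm m.+1 x = Fm m x * w (x ord0 (Ordinal hm)).
Proof.
move=> m0; rewrite /Fm big_nat_recr //= mulrA; congr (_ * w (x ord0 _)).
by apply: val_inj; rewrite /= inordK.
Qed.

Lemma Fm_upd m (x : V) (j : 'I_n.+1) t : (0 < m)%N -> (m <= j)%N ->
  Fm m (upd x j t) = Fm m x.
Proof.
move=> m0 mj; rewrite /Fm !mxE.
have -> : (ord0 == j) = false by apply/negbTE/eqP => j0; have := mj; rewrite -j0; case: m m0 {mj}.
congr (_ * _); apply: eq_big_nat => i /andP[_ im]; rewrite mxE.
have -> // : (inord i == j) = false.
apply/negbTE/eqP => ij; have := mj; rewrite -ij inordK; first by rewrite leqNgt im.
by apply: (leq_trans im); apply: (leq_trans mj); exact: ltnW.
Qed.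

End Bound2.

Lemma usum_bound (R : realType) (l : R) : 0 < l -> forall N,
  \sum_(0 <= k < N) l * ((1 + k%:R * l)^-1) ^+ 2 <= l + 1.
Proof.
move=> l0.
pose u (k : nat) := (1 + k%:R * l)^-1.
have u0 k : 0 <= u k by rewrite invr_ge0 addr_ge0 // mulr_ge0 // ltW.
have L1 N : \sum_(0 <= k < N) l * u k.+1 ^+ 2 + u N <= 1.
  elim: N => [|N IH]; first by rewrite big_geq // add0r /u mul0r addr0 invr1.
  rewrite big_nat_recr //=; apply: le_trans IH; rewrite -addrA lerD2l.
  have := @ustep R (1 + N%:R * l) l _ l0.
  have e : 1 + N.+1%:R * l = 1 + N%:R * l + l by rewrite -natr1 mulrDl mul1r addrA.
  rewrite /u e; apply.
  by rewrite ltr_wpDr // mulr_ge0 // ltW.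
case => [|N]; first by rewrite big_geq // addr_ge0 // ltW.
rewrite big_nat_recl // /u mul0r addr0 invr1 expr1n mulr1 lerD2l.
by apply: le_trans (L1 N); rewrite lerDl.
Qed.

Lemma step (R : realType) (n m : nat) (C : R) (hm : (m < n.+1)%N) :
  (0 < m)%N -> 0 <= C ->
  (forall a b, a <= b -> (@lebesgue_outer R n.+1 (@Sm R n m a b) <= (C * (b - a))%:E)%E) ->
  forall a b, a <= b ->
    (@lebesgue_outer R n.+1 (@Sm R n m.+1 a b) <= (6 * C * (b - a))%:E)%E.
Proof.
move=> m0 C0 IH a b; rewrite le_eqVlt => /orP[/eqP <-|ab].
  have -> : @Sm R n m.+1 a a = set0.
    rewrite -subset0 => x [/andP[h1 h2] _].
    by move: (le_lt_trans h1 h2); rewrite ltxx.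
  by rewrite outer0 subrr mulr0.
set mu := @lebesgue_outer R n.+1.
set j := Ordinal hm.
set dl := b - a.
set K := `|a| + `|b|.
have d0 : 0 < dl by rewrite subr_gt0.
have K0 : 0 <= K by rewrite addr_ge0.
have Kd0 : 0 < K + dl by rewrite ltr_wpDl.
set l := dl / (K + dl).
have l0 : 0 < l by rewrite divr_gt0.
have l1 : l <= 1 by rewrite ler_pdivrMr // mul1r; lra.
have lK : l * K <= dl.
  rewrite /l mulrAC ler_pdivrMr // ler_pM2l //; lra.
pose u (k : nat) := (1 + k%:R * l)^-1.
have upos k : 0 < 1 + k%:R * l by rewrite ltr_wpDr // mulr_ge0 // ltW.
have u0 k : 0 < u k by rewrite invr_gt0.
have umon k : u k.+1 <= u k.
  by rewrite /u lef_pV2 ?posrE // lerD2l ler_pM2r // ler_nat.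
pose lo k := Num.min (a * u k ^+ 2) (a * u k.+1 ^+ 2).
pose hi k := Num.max (b * u k ^+ 2) (b * u k.+1 ^+ 2).
have lohi k : lo k <= hi k.
  apply: le_trans (_ : _ <= a * u k ^+ 2) _; first by rewrite ge_min lexx.
  apply: le_trans (_ : _ <= b * u k ^+ 2) _; first by rewrite ler_pM2r ?exprn_gt0 // ltW.
  by rewrite le_max lexx.
have piece (x : 'rV[R]_n.+1) s k : @Sm R n m.+1 a b x -> s <= x ord0 j < s + l ->
    k%:R * l <= `|x ord0 j| <= k.+1%:R * l ->
    @Sm R n m (lo k) (hi k) (upd x j ((x ord0 j - s) / l)).
  move=> [/andP[F1 F2] Hj] /andP[s1 s2] /andP[t1 t2]; split.
    rewrite Fm_upd //.
    move: F1 F2; rewrite (Fm_succ hm x m0) => F1 F2.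
    set f := Fm m x; set W := w (x ord0 j).
    have W0 : 0 < W by exact: w_gt0.
    have -> : f = (f * W) * W^-1 by rewrite mulfK // gt_eqF.
    have WE : W^-1 = ((1 + `|x ord0 j|)^-1) ^+ 2 by rewrite /W /w exprVn.
    have hx : 0 < 1 + `|x ord0 j| by rewrite ltr_wpDr.
    apply: interp_bounds; last by rewrite F1 F2.
    - by rewrite exprn_gt0.
    - rewrite WE ler_sqr ?nnegrE ?invr_ge0 ?(ltW (u0 _)) ?(ltW (upos _)) ?(ltW hx) //.
      by rewrite /u lef_pV2 ?posrE // lerD2l.
    - rewrite WE ler_sqr ?nnegrE ?invr_ge0 ?(ltW (u0 _)) ?(ltW (upos _)) ?(ltW hx) //.
      by rewrite /u lef_pV2 ?posrE // lerD2l.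
  move=> i mi; rewrite mxE; case: eqP => [_|/eqP ij].
    apply/andP; split; first by rewrite divr_ge0 ?subr_ge0 // ltW.
    by rewrite ltr_pdivrMr // mul1r ltrBlDl.
  apply: Hj; rewrite ltn_neqAle mi andbT; apply: contra ij => /eqP mi'.
  by apply/eqP; apply: val_inj; rewrite /= mi'.
have vmon k : u k.+1 ^+ 2 <= u k ^+ 2.
  by rewrite ler_sqr ?nnegrE ?(ltW (u0 _)).
have Pbound s k (P : set 'rV[R]_n.+1) :
    (forall x, P x -> [/\ @Sm R n m.+1 a b x, s <= x ord0 j < s + l &
                      k%:R * l <= `|x ord0 j| <= k.+1%:R * l]) ->
    (mu P <= (l * (C * (dl * u k ^+ 2 + K * (u k ^+ 2 - u k.+1 ^+ 2))))%:E)%E.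
  move=> HP.
  apply: le_trans (@outer_scale R n (@Sm R n m (lo k) (hi k)) P j s l l0 _) _.
    by move=> x /HP [h1 h2 h3]; apply: piece.
  rewrite [X in (_ <= X)%E]EFinM; apply: lee_wpmul2l; first by rewrite lee_fin ltW.
  apply: le_trans (IH _ _ (lohi k)) _.
  rewrite lee_fin ler_wpM2l //.
  apply: width_bound; [by rewrite exprn_ge0 // ltW | exact: vmon | exact: ltW].
pose f k := l * (C * (dl * u k ^+ 2 + K * (u k ^+ 2 - u k.+1 ^+ 2))).
have f0 k : 0 <= f k.
  rewrite mulr_ge0 ?(ltW l0) // mulr_ge0 // addr_ge0 // ?mulr_ge0 ?(ltW d0) ?exprn_ge0 ?(ltW (u0 _)) //.
  by rewrite subr_ge0.
have fsum : (\sum_(0 <= k <oo) (f k)%:E <= (3 * C * dl)%:E)%E.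
  apply: series_le => // N.
  have e : \sum_(0 <= k < N) f k = C * dl * (\sum_(0 <= k < N) l * u k ^+ 2) +
      C * (l * K) * (\sum_(0 <= k < N) (u k ^+ 2 - u k.+1 ^+ 2)).
    rewrite !mulr_sumr -big_split /=; apply: eq_bigr => k _; rewrite /f; ring.
  have S1 := usum_bound l0 N.
  have S2 : \sum_(0 <= k < N) (u k ^+ 2 - u k.+1 ^+ 2) <= 1.
    rewrite (eq_bigr (fun k => - (u k.+1 ^+ 2 - u k ^+ 2))); last by move=> k _; rewrite opprB.
    rewrite sumrN telescope_sumr // opprB /u mul0r addr0 invr1 expr1n lerBlDr lerDl.
    exact: exprn_ge0 (ltW (u0 _)).
  have S20 : 0 <= \sum_(0 <= k < N) (u k ^+ 2 - u k.+1 ^+ 2).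
    by apply: sumr_ge0 => k _; rewrite subr_ge0.
  rewrite e.
  have h1 : C * dl * (\sum_(0 <= k < N) l * u k ^+ 2) <= C * dl * 2.
    by rewrite ler_wpM2l ?mulr_ge0 ?(ltW d0) //; apply: le_trans S1 _; lra.
  have h2 : C * (l * K) * (\sum_(0 <= k < N) (u k ^+ 2 - u k.+1 ^+ 2)) <= C * dl.
    apply: le_trans (_ : _ <= C * (l * K) * 1) _.
      by rewrite ler_wpM2l // mulr_ge0 // mulr_ge0 // ltW.
    by rewrite mulr1 ler_wpM2l.
  lra.
set Pp := fun k => @Sm R n m.+1 a b `&` [set x | k%:R * l <= x ord0 j < k.+1%:R * l].
set Pn := fun k => @Sm R n m.+1 a b `&` [set x | - (k.+1%:R * l) <= x ord0 j < - (k%:R * l)].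
have cover : @Sm R n m.+1 a b `<=` (\bigcup_k Pp k) `|` (\bigcup_k Pn k).
  move=> x Sx.
  have f1 := floor_le_tmp (x ord0 j / l).
  have f2 := lt_succ_floor (x ord0 j / l).
  rewrite ler_pdivlMr // in f1; rewrite ltr_pdivrMr // in f2.
  case E: (Num.floor (x ord0 j / l)) f1 f2 => [k|k] f1 f2.
    left; exists k => //; split => //=; apply/andP; split => //.
    by move: f2; rewrite intrD -natr1.
  right; exists k => //; split => //=; apply/andP; split.
    by move: f1; rewrite NegzE intrN mulNr.
  move: f2; rewrite (_ : (Negz k + 1 = - (k%:Z))%R); last by rewrite NegzE intS opprD addrC addrA addrN add0r.
  by rewrite intrN mulNr.
have Bp : (mu (\bigcup_k Pp k) <= (3 * C * dl)%:E)%E.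
  apply: le_trans (outer_sigma_subadditive _) _.
  apply: le_trans fsum; apply: lee_nneseries => [k _ _|k _]; first exact: outer_ge0.
  apply: (Pbound (k%:R * l)) => x [Sx /andP[h1 h2]]; split => //.
    by rewrite h1 /= -[k.+1%:R]natr1 mulrDl mul1r in h2 *.
  have t0 : 0 <= x ord0 j by apply: le_trans h1; rewrite mulr_ge0 // ltW.
  by rewrite ger0_norm // h1 ltW.
have Bn : (mu (\bigcup_k Pn k) <= (3 * C * dl)%:E)%E.
  apply: le_trans (outer_sigma_subadditive _) _.
  apply: le_trans fsum; apply: lee_nneseries => [k _ _|k _]; first exact: outer_ge0.
  apply: (Pbound (- (k.+1%:R * l))) => x [Sx /andP[h1 h2]]; split => //.
    rewrite h1 /=; move: h2; rewrite -[k.+1%:R]natr1 mulrDl mul1r opprD addrNK //.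
  have t0 : x ord0 j < 0.
    by apply: lt_le_trans h2 _; rewrite oppr_le0 mulr_ge0 // ltW.
  rewrite ltr0_norm // ; apply/andP; split; first by rewrite lerNr ltW.
  by rewrite lerNl.
apply: le_trans (le_outer cover) _.
apply: le_trans (outer_measureU2 _ _ _) _.
apply: le_trans (leeD Bp Bn) _.
rewrite -EFinD lee_fin /dl; lra.
Qed.

Section Final.
Variables (R : realType) (n : nat).
Local Notation V := 'rV[R]_n.+1.
Local Notation mu := (@lebesgue_outer R n.+1).
Local Notation T := (caratheodory_type mu).

Lemma Sm_bound m : (0 < m)%N -> (m <= n.+1)%N -> forall a b, a <= b ->
  (mu (@Sm R n m a b) <= ((6 : R) ^+ m.-1 * (b - a))%:E)%E.
Proof.
elim: m => // -[_ _ _ a b ab|m IH _ hm a b ab].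
  by rewrite expr0 mul1r; exact: S1_bound.
have := @step R n m.+1 ((6 : R) ^+ m) hm isT _ (IH isT (ltnW hm)) a b ab.
by rewrite [in X in _ -> X]exprS; apply; rewrite exprn_ge0.
Qed.

Definition blk (k : int) : set V := [set x | k%:~R <= Fm n.+1 x < (k + 1)%:~R].

Lemma blk_bound k : (mu (blk k) <= ((6 : R) ^+ n)%:E)%E.
Proof.
have -> : blk k = @Sm R n n.+1 k%:~R (k + 1)%:~R.
  apply/seteqP; split => x; first by move=> h; split => // j; rewrite leqNgt ltn_ord.
  by case.
apply: le_trans (Sm_bound _ _ _) _ => //; first by rewrite ler_int lerDl.
by rewrite intrD addrAC subrr add0r mulr1.
Qed.

Lemma Fm_mfun : measurable_fun setT (fun x : T => Fm n.+1 x).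
Proof.
apply: measurable_realfun.measurable_funM; first exact: coord_mfun.
apply: measurable_prod => i _.
apply: measurable_realfun.measurable_funX; apply: measurable_realfun.measurable_funD; first exact: measurable_cst.
exact: measurableT_comp (@measurable_realfun.normr_measurable R setT) (coord_mfun _).
Qed.

Lemma blk_meas k : lebesgue_measurable (blk k).
Proof.
have := Fm_mfun measurableT (measurable_itv `[k%:~R, (k + 1)%:~R[).
rewrite setTI.
have -> : (fun x : T => Fm n.+1 x) @^-1` `[k%:~R, (k + 1)%:~R[ = blk k.
  by apply/seteqP; split => x /=; rewrite in_itv.
by [].
Qed.

End Final.

Section Cont.
Variables (R : realType) (n : nat).
Local Notation V := 'rV[R]_n.+1.

Definition cont_at (f : V -> R) (p : V) := forall e, 0 < e ->
  exists2 dl, 0 < dl & forall q, dmax q p <= dl -> `|f q - f p| < e.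

Lemma coord_le_dmax (q p : V) j : `|q ord0 j - p ord0 j| <= dmax q p.
Proof.
rewrite /dmax; elim: (index_enum _) (mem_index_enum j) => // a s IH.
rewrite in_cons big_cons /= le_max => /orP[/eqP ->|/IH ->]; first by rewrite lexx.
by rewrite orbT.
Qed.

Lemma cont_ext f g p : (forall x, f x = g x) -> cont_at f p -> cont_at g p.
Proof.
move=> fg cf e e0; have [dl dl0 h] := cf e e0; exists dl => // q /h.
by rewrite !fg.
Qed.

Lemma cont_cst c p : cont_at (fun _ => c) p.
Proof. by move=> e e0; exists 1 => // q _; rewrite subrr normr0. Qed.

Lemma cont_coord j p : cont_at (fun x => x ord0 j) p.
Proof.
move=> e e0; exists (e / 2); first by rewrite divr_gt0.
move=> q h; apply: le_lt_trans (coord_le_dmax q p j) _; apply: le_lt_trans h _.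
by rewrite ltr_pdivrMr // ltr_pMr // ltr1n.
Qed.

Lemma cont_wn j p : cont_at (fun x => 1 + `|x ord0 j|) p.
Proof.
move=> e e0; have [dl dl0 h] := cont_coord j p e0; exists dl => // q /h hq.
apply: le_lt_trans hq.
have -> : 1 + `|q ord0 j| - (1 + `|p ord0 j|) = `|q ord0 j| - `|p ord0 j| by ring.
exact: ler_dist_dist.
Qed.

Lemma cont_mul f g p : cont_at f p -> cont_at g p -> cont_at (fun x => f x * g x) p.
Proof.
move=> cf cg e e0.
set A := `|f p| + 1; set B := `|g p| + 1.
have A0 : 0 < A by rewrite ltr_wpDl.
have B0 : 0 < B by rewrite ltr_wpDl.
set x1 := e / (2 * B); set y1 := e / (2 * A).
have x10 : 0 < x1 by rewrite divr_gt0 // mulr_gt0.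
have y10 : 0 < y1 by rewrite divr_gt0 // mulr_gt0.
have x1B : x1 * B = e / 2 by rewrite /x1; field; rewrite gt_eqF.
have y1A : y1 * A = e / 2 by rewrite /y1; field; rewrite gt_eqF.
have [d1 d10 h1] := cf x1 x10.
have my : 0 < Num.min 1 y1 by rewrite lt_min ltr01 y10.
have [d2 d20 h2] := cg _ my.
exists (Num.min d1 d2); first by rewrite lt_min d10.
move=> q; rewrite le_min => /andP[q1 q2].
have {}h1 := h1 q q1; have {}h2 := h2 q q2.
move: h2; rewrite lt_min => /andP[h2 h3].
have -> : f q * g q - f p * g p = (f q - f p) * g q + f p * (g q - g p) by ring.
apply: le_lt_trans (ler_normD _ _) _; rewrite !normrM.
have gq : `|g q| < B.
  have : `|g q| <= `|g p| + `|g q - g p|.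
    by rewrite -[X in `|X|](subrK (g p)) addrC; apply: (le_trans (ler_normD _ _)); rewrite addrC.
  rewrite /B; lra.
have fp : `|f p| < A by rewrite /A ltrDl.
have n1 := normr_ge0 (f q - f p); have n2 := normr_ge0 (g q); have n3 := normr_ge0 (f p);
have n4 := normr_ge0 (g q - g p).
nra.
Qed.

End Cont.

Section Part1.
Variables (R : realType) (n : nat).
Local Notation V := 'rV[R]_n.+1.

Lemma cont_prod (s : seq nat) (h : nat -> V -> R) p :
  (forall i, cont_at (h i) p) -> cont_at (fun x => \prod_(i <- s) h i x) p.
Proof.
move=> ch; elim: s => [|a s IH].
  by apply: cont_ext (cont_cst 1 p) => x; rewrite big_nil.
by apply: cont_ext (cont_mul (ch a) IH) => x; rewrite big_cons.
Qed.

Lemma cont_F p : cont_at (@Fm R n n.+1) p.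
Proof.
apply: cont_mul; first exact: cont_coord.
apply: cont_prod => i.
by apply: cont_ext (cont_mul (cont_wn (inord i) p) (cont_wn (inord i) p)) => x; rewrite /w expr2.
Qed.

Lemma blk_uniq k k' (x : V) : blk k x -> blk k' x -> k = k'.
Proof.
move=> /andP[h1 h2] /andP[h3 h4].
have : k%:~R < (k' + 1)%:~R :> R by apply: le_lt_trans h1 h4.
have : k'%:~R < (k + 1)%:~R :> R by apply: le_lt_trans h3 h2.
rewrite !ltr_int; lia.
Qed.

Lemma blk_floor (x : V) : blk (Num.floor (Fm n.+1 x)) x.
Proof. by apply/andP; split; [exact: floor_le_tmp | exact: lt_succ_floor]. Qed.

End Part1.

Lemma part1 (R : realType) (n : nat) : (0 < n)%N ->
  exists (P : set (set 'rV[R]_n.+1)) (M : R),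
       [/\ is_partition P, 0 < M,
           (forall X, P X -> lebesgue_measurable X /\ (m X < M%:E)%E)
         & exists eps : 'rV[R]_n.+1 -> R,
             (forall p, 0 < eps p) /\
             (forall p, (neighbours P (eps p) p #<= `I_n.+1)%card)].
Proof.
move=> n0.
pose P := [set X : set 'rV[R]_n.+1 | exists k, X = blk k].
exists P, ((6 : R) ^+ n + 1); split.
- split.
  + move=> _ [k ->]; exists (\row_i (if i == ord0 then k%:~R else 0)).
    rewrite /blk /= /Fm !mxE eqxx big_seq big1 ?mulr1.
      by rewrite intrD lexx ltrDl ltr01.
    move=> i; rewrite mem_index_iota => /andP[i1 i2]; rewrite mxE.
    have -> : (inord i == ord0 :> 'I_n.+1) = false.
      by apply/negbTE/eqP => /(congr1 val) /=; rewrite inordK //; lia.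
    by rewrite /w normr0 addr0 expr1n.
  + move=> _ _ [k ->] [k' ->] [x [h1 h2]]; congr blk; exact: blk_uniq h1 h2.
  + by move=> x; exists (blk (Num.floor (Fm n.+1 x))); split; [exists (Num.floor (Fm n.+1 x)) | exact: blk_floor].
- by rewrite ltr_wpDl // exprn_ge0.
- move=> _ [k ->]; split; first exact: blk_meas.
  by apply: le_lt_trans (blk_bound _ _ _) _; rewrite lte_fin ltrDl ltr01.
have half : (0 : R) < 1 / 2 by rewrite divr_gt0.
have [eps heps] := @choice _ R (fun (p : 'rV[R]_n.+1) dl => 0 < dl /\
   forall q, dmax q p <= dl -> `|Fm n.+1 q - Fm n.+1 p| < 1 / 2)
  (fun p => let: ex_intro2 dl h1 h2 := cont_F p half in ex_intro _ dl (conj h1 h2)).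
exists eps; split => [p|p]; first by case: (heps p).
case: (heps p) => _ hp.
set z0 := Num.floor (Fm n.+1 p - 1 / 2).
pose g (i : nat) : set ('rV[R]_n.+1) := blk (z0 + i%:Z).
apply: (@card_le_trans _ _ _ (g @` `I_2)).
  apply: subset_card_le => _ [[k ->] [q [qk qb]]].
  have := hp q qb; move: qk => /andP[h1 h2].
  have f1 := floor_le_tmp (Fm n.+1 p - 1 / 2).
  have f2 := lt_succ_floor (Fm n.+1 p - 1 / 2).
  rewrite -/z0 in f1 f2 => hq.
  have hq' : Fm n.+1 p - 1 / 2 < Fm n.+1 q < Fm n.+1 p + 1 / 2.
    move: hq; rewrite ltr_norml => /andP[a b]; apply/andP; split; lra.
  have k1 : z0%:~R < (k + 1)%:~R :> R.
    by apply: le_lt_trans f1 _; apply: lt_trans h2; case/andP: hq'.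
  have k2 : k%:~R < (z0 + 2)%:~R :> R.
    apply: le_lt_trans h1 _; case/andP: hq' => _ hq2; apply: lt_trans hq2 _.
    rewrite (_ : (z0 + 2)%:~R = (z0 + 1)%:~R + 1 :> R); last by rewrite !intrD addrA.
    move: f2; lra.
  rewrite !ltr_int in k1 k2.
  have [->|kz] := eqVneq k z0.
    by exists 0%N => //; rewrite /g addr0.
  by exists 1%N => //; rewrite /g; congr blk; lia.
apply: (@card_le_trans _ _ _ `I_2); first exact: card_image_le.
by rewrite card_le_II.
Qed.

Lemma outer_setT_ge (R : realType) (M : R) : 0 < M ->
  (M%:E <= @lebesgue_outer R 1 setT)%E.
Proof.
move=> M0; apply: le_ereal_inf_tmp => _ [[a b] /= cov <-].
have := @measure_sigma_subadditive _ R _ (@lebesgue_measure R) (`[0, M]%classic : set R)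
  (fun k => `[a k ord0 ord0, b k ord0 ord0[%classic) (fun k => measurable_itv _)
  (measurable_itv _).
move=> h.
have cv : (`[0, M]%classic : set R) `<=` \bigcup_k `[a k ord0 ord0, b k ord0 ord0[%classic.
  move=> t _; have [k _ hk] := cov (\row_(i < 1) t) I; exists k => //.
  by have := hk ord0; rewrite !mxE /= in_itv.
have {}h := h cv.
have e : (M%:E <= lebesgue_measure (`[0%R, M]%classic : set R))%E.
  by rewrite lebesgue_measure_itv /= lte_fin M0 oppr0 adde0.
apply: le_trans (le_trans e h) _.
have ek k : (lebesgue_measure (`[a k ord0 ord0, b k ord0 ord0[%classic : set R)
    <= (box_vol (a k) (b k))%:E)%E.
  rewrite lebesgue_measure_itv /box_vol big_ord1 /=.
  case: ifPn => [ab|_]; last by rewrite lee_fin le_max lexx.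
  by rewrite -EFinB lee_fin le_max lexx orbT.
apply: lee_nneseries => [k _ _|k _]; [exact: measure_ge0 | exact: ek].
Qed.

Lemma dmax_le (R : realType) d (x y : 'rV[R]_d) r : 0 <= r ->
  (forall i, `|x ord0 i - y ord0 i| <= r) -> dmax x y <= r.
Proof.
move=> r0 h; rewrite /dmax; elim: (index_enum _) => [|a s IH]; first by rewrite big_nil.
by rewrite big_cons /= ge_max h IH.
Qed.

Lemma open_of (R : realType) (S : set R) :
  (forall t, S t -> exists2 e, 0 < e & forall s, `|t - s| < e -> S s) -> open S.
Proof.
move=> h; rewrite openE => t /h [e e0 he]; apply/nbhs_ballP; exists e => // s.
Qed.

Lemma part2 (R : realType) (P : set (set 'rV[R]_1)) (M : R) :
  is_partition P -> 0 < M ->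
  (forall X, P X -> lebesgue_measurable X /\ (m X < M%:E)%E) ->
  forall eps : 'rV[R]_1 -> R, (forall p, 0 < eps p) ->
    exists p, (`I_2 #<= neighbours P (eps p) p)%card.
Proof.
move=> [Pne Pdis Pcov] M0 PM eps eps0.
apply: contrapT => /forallNP H.
have claim p q X : dmax q p <= eps p -> P X -> X q -> X p.
  move=> qp PX Xq.
  have [Xp [PXp Xpp]] := Pcov p.
  have [->//|neq] := pselect (X = Xp).
  exfalso; apply: (H p).
  apply/pcard_leP; apply/injfunPex.
  exists (fun i : nat => if i == 0%N then Xp else X).
  - move=> i /= i2; case: ifP => _; split => //.
      exists p; split => //; apply: dmax_le => [|i']; first exact: ltW.
      by rewrite subrr normr0 ltW.
    by exists q.
  - move=> i j /= i2 j2; rewrite /mkset in i2 j2.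
    case: ifP => /eqP i0; case: ifP => /eqP j0 //.
    all: try by rewrite i0 j0.
    all: try by move=> e; exfalso; apply: neq; rewrite e.
    all: try by move=> e; exfalso; apply: neq; rewrite -e.
    by move=> _; move: i2 j2; rewrite !in_setE /=; lia.
pose c (t : R) : 'rV[R]_1 := \row_(i < 1) t.
have dc s t : `|t - s| < eps (c t) -> dmax (c s) (c t) <= eps (c t).
  move=> h; apply: dmax_le => [|i]; first exact: ltW.
  by rewrite !mxE distrC ltW.
have [X0 [PX0 X0c]] := Pcov (c 0).
pose S := [set t : R | X0 (c t)].
have Sopen : open S.
  apply: open_of => t St; exists (eps (c t)) => // s hs.
  have [Xs [PXs Xss]] := Pcov (c s).
  have Xst := claim _ _ _ (dc _ _ hs) PXs Xss.
  have e : X0 = Xs by apply: Pdis => //; exists (c t).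
  by rewrite /S /= e.
have SCopen : open (~` S).
  apply: open_of => t St; exists (eps (c t)) => // s hs Ss.
  by apply: St; exact: claim _ _ _ (dc _ _ hs) PX0 Ss.
have cT : connected [set: R].
  by apply/connected_intervalP => x y _ _ z _.
have ST : S = setT.
  apply: cT; first by exists 0.
    by exists S => //; rewrite setTI.
  exists S; last by rewrite setTI.
  by rewrite -[S]setCK; apply: open_closedC.
have X0T : X0 = setT.
  apply/seteqP; split => // x _.
  have -> : x = c (x ord0 ord0) by apply/rowP => i; rewrite !mxE (ord1 i).
  by have : S (x ord0 ord0) by rewrite ST.
have := (PM X0 PX0).2; rewrite X0T /m.
by rewrite ltNge (outer_setT_ge M0).
Qed.

Theorem mainTheorem16 (R : realType) :
  (forall d : nat, (2 <= d)%N ->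
     exists (P : set (set 'rV[R]_d)) (M : R),
       [/\ is_partition P, 0 < M,
           (forall X, P X -> lebesgue_measurable X /\ (m X < M%:E)%E)
         & exists eps : 'rV[R]_d -> R,
             (forall p, 0 < eps p) /\
             (forall p, (neighbours P (eps p) p #<= `I_d)%card)]) /\
  (forall (P : set (set 'rV[R]_1)) (M : R),
     is_partition P -> 0 < M ->
     (forall X, P X -> lebesgue_measurable X /\ (m X < M%:E)%E) ->
     forall eps : 'rV[R]_1 -> R, (forall p, 0 < eps p) ->
       exists p, (`I_2 #<= neighbours P (eps p) p)%card).
Proof.
split.
  by case => [|[|n]] // _; exact: (@part1 R n.+1).
exact: part2.
Qed.
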